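(* Let $N\in\boldsymbol{\Pi}_{q,r}$. Let $x\in\mathbb{R}^q$ be nonzero and $y\in\mathbb{R}^r$ be such that $\begin{bmatrix}x\\ y\end{bmatrix}^\top N\begin{bmatrix}x\\ y\end{bmatrix}\ge 0$. Then there exists $Z\in\mathcal{Z}_r(N)$ such that $\begin{bmatrix}x\\ y\end{bmatrix}=\begin{bmatrix}I\\ Z\end{bmatrix}x$, i.e., $y=Zx$.
   Context: $\mathbb{S}^k$ denotes the real symmetric $k\times k$ matrices; for symmetric matrices, $A\ge 0$ means positive semidefinite. $A^\dagger$ is the Moore–Penrose pseudo-inverse. Any $N\in\mathbb{S}^{q+r}$ is partitioned as $N=\begin{bmatrix}N_{11}&N_{12}\\ N_{21}&N_{22}\end{bmatrix}$ with $N_{11}\in\mathbb{S}^q$, $N_{22}\in\mathbb{S}^r$. The generalized Schur complement is $N\mid N_{22}:=N_{11}-N_{12}N_{22}^\dagger N_{21}$. The set $\boldsymbol{\Pi}_{q,r}$ consists of all $N\in\mathbb{S}^{q+r}$ with $N_{22}\le 0$, $N\mid N_{22}\ge 0$ and $\ker N_{22}\subseteq\ker N_{12}$. Define $\mathcal{Z}_r(N)=\{Z\in\mathbb{R}^{r\times q}:\begin{bmatrix}I_q\\ Z\end{bmatrix}^\top N\begin{bmatrix}I_q\\ Z\end{bmatrix}\ge 0\}$. *)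

(* Defs.v *)
From HB Require Import structures.
From mathcomp Require Import all_boot all_order all_algebra.
From mathcomp Require Import reals.
From Stdlib Require Import ClassicalEpsilon.
Set Implicit Arguments. Unset Strict Implicit. Unset Printing Implicit Defensive.
Import Order.TTheory GRing.Theory Num.Theory.
Local Open Scope ring_scope.

Definition symmx (R : realType) n (A : 'M[R]_n) : Prop := A^T = A.

Definition psd (R : realType) n (A : 'M[R]_n) : Prop :=
  symmx A /\ forall v : 'cV[R]_n, 0 <= (v^T *m A *m v) 0 0.

Definition nsd (R : realType) n (A : 'M[R]_n) : Prop := psd (- A).

Definition is_mpinv (R : realType) m n (A : 'M[R]_(m, n)) (X : 'M[R]_(n, m)) : Prop :=
  [/\ A *m X *m A = A, X *m A *m X = X, (A *m X)^T = A *m X & (X *m A)^T = X *m A].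

(* Moore-Penrose pseudo-inverse: the (unique, existing) solution of the
   Penrose equations, chosen by classical epsilon *)
Definition mpinv (R : realType) m n (A : 'M[R]_(m, n)) : 'M[R]_(n, m) :=
  epsilon (inhabits 0) (is_mpinv A).

Definition schur (R : realType) q r (N : 'M[R]_(q + r)) : 'M[R]_q :=
  ulsubmx N - ursubmx N *m mpinv (drsubmx N) *m dlsubmx N.

Definition Pi_set (R : realType) q r (N : 'M[R]_(q + r)) : Prop :=
  [/\ symmx N, nsd (drsubmx N), psd (schur N) &
      forall v : 'cV[R]_r, drsubmx N *m v = 0 -> ursubmx N *m v = 0].

Definition Zset (R : realType) q r (N : 'M[R]_(q + r)) (Z : 'M[R]_(r, q)) : Prop :=
  psd ((col_mx 1%:M Z)^T *m N *m col_mx 1%:M Z).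

(* Main.v *)
Require Import Defs.
From HB Require Import structures.
From mathcomp Require Import all_boot all_order all_algebra.
From mathcomp Require Import reals.
From Stdlib Require Import ClassicalEpsilon.
From mathcomp Require Import ring lra.
Set Implicit Arguments. Unset Strict Implicit.
Import Order.TTheory GRing.Theory Num.Theory.
Local Open Scope ring_scope.
Lemma sos0 (R : realType) n (w : 'cV[R]_n) : (w^T *m w) 0 0 = 0 -> w = 0.
Proof.
rewrite !mxE => H.
have H2 : forall i, i \in predT -> w^T 0 i * w i 0 = 0.
  apply/psumr_eq0P => // i _; rewrite mxE -expr2; exact: sqr_ge0.
apply/matrixP => i j; rewrite (ord1 j) mxE.
by have := H2 i isT; rewrite mxE -expr2 => /eqP; rewrite sqrf_eq0 => /eqP.
Qed.

Lemma gram_unit (R : realType) k n (G : 'M[R]_(k, n)) : row_free G -> G *m G^T \in unitmx.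
Proof.
move=> fG; rewrite -row_free_unit; apply: inj_row_free => v Hv.
have : (v *m G) *m (v *m G)^T = 0 by rewrite trmx_mul mulmxA -(mulmxA v) Hv mul0mx.
move=> H0.
have : v *m G = 0.
  apply: trmx_inj; rewrite trmx0; apply: sos0; rewrite trmxK.
  by rewrite H0 mxE.
move=> H1; apply: (row_free_inj fG); by rewrite H1 mul0mx.
Qed.

Lemma mp_fact (R : realType) m k n (F : 'M[R]_(m, k)) (G : 'M[R]_(k, n)) :
  row_free G -> row_free F^T -> is_mpinv (F *m G)
    (G^T *m invmx (G *m G^T) *m invmx (F^T *m F) *m F^T).
Proof.
move=> fG fF.
have uG := @gram_unit _ _ _ G fG.
have uF : F^T *m F \in unitmx by have := @gram_unit _ _ _ _ fF; rewrite trmxK.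
set X := G^T *m invmx (G *m G^T) *m invmx (F^T *m F) *m F^T.
have e1 : F *m G *m X = F *m invmx (F^T *m F) *m F^T.
  by rewrite /X -!mulmxA (mulmxA G) (mulmxA (G *m G^T)) mulmxV // mul1mx !mulmxA.
have e2 : X *m (F *m G) = G^T *m invmx (G *m G^T) *m G.
  by rewrite /X -!mulmxA (mulmxA F^T) (mulmxA _ (F^T *m F)) mulVmx // mul1mx !mulmxA.
split.
- by rewrite e1 -!mulmxA (mulmxA F^T) (mulmxA _ (F^T *m F)) mulVmx // mul1mx.
- by rewrite e2 /X -!mulmxA (mulmxA G) (mulmxA _ (G *m G^T)) mulVmx // mul1mx.
- rewrite e1 !trmx_mul trmxK -!mulmxA; congr (_ *m _).
  rewrite trmx_inv trmx_mul trmxK //.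
- rewrite e2 !trmx_mul trmxK -!mulmxA; congr (_ *m _).
  rewrite trmx_inv trmx_mul trmxK //.
Qed.

Lemma mp_exists (R : realType) m n (A : 'M[R]_(m, n)) : exists X, is_mpinv A X.
Proof.
rewrite -(mulmx_base A); eexists; apply: mp_fact.
  exact: row_base_free.
by rewrite /row_free mxrank_tr; exact: col_base_full.
Qed.

Lemma mpinvP (R : realType) m n (A : 'M[R]_(m, n)) : is_mpinv A (mpinv A).
Proof. rewrite /mpinv; apply: epsilon_spec; exact: mp_exists. Qed.
Lemma BPC (R : realType) q r (N : 'M[R]_(q + r)) :
  (forall v : 'cV[R]_r, drsubmx N *m v = 0 -> ursubmx N *m v = 0) ->
  ursubmx N *m mpinv (drsubmx N) *m drsubmx N = ursubmx N.
Proof.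
move=> hk; set B := ursubmx N; set C := drsubmx N; set P := mpinv C.
have [h1 _ _ _] := mpinvP C; rewrite -/P in h1.
have hM : B *m (1%:M - P *m C) = 0.
  apply/matrixP => i j; rewrite mxE.
  have hc : C *m col j (1%:M - P *m C) = 0.
    by rewrite colE mulmxA mulmxBr mulmx1 mulmxA h1 subrr mul0mx.
  have := congr1 (fun M : 'M[R]_(q,1) => M i 0) (hk _ hc).
  by rewrite colE mulmxA -colE !mxE.
by move: hM; rewrite mulmxBr mulmx1 mulmxA => /eqP; rewrite subr_eq0 => /eqP/esym.
Qed.

Lemma zfact (V : zmodType) (a b c d e : V) :
  a + b + (c + d) = a - e + (d + c + (b + e)).
Proof.
rewrite -[LHS]addrA -[RHS]addrA; congr (a + _).
by rewrite [d + c]addrC (addrC b e) [c + d + _]addrCA addKr addrC.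
Qed.

Lemma quad (R : realType) q r (N : 'M[R]_(q + r)) k (u : 'M[R]_(q, k)) (v : 'M[R]_(r, k)) :
  symmx N ->
  (forall w : 'cV[R]_r, drsubmx N *m w = 0 -> ursubmx N *m w = 0) ->
  (col_mx u v)^T *m N *m col_mx u v =
  u^T *m schur N *m u +
  (v + (mpinv (drsubmx N))^T *m (ursubmx N)^T *m u)^T *m drsubmx N *m
  (v + (mpinv (drsubmx N))^T *m (ursubmx N)^T *m u).
Proof.
move=> hN hk; have hBPC := BPC hk.
rewrite /schur.
set A := ulsubmx N; set B := ursubmx N; set C := drsubmx N; set P := mpinv C.
rewrite -/B -/C -/P in hBPC.
have hBt : dlsubmx N = B^T by rewrite /B trmx_ursub hN.
have hC : C^T = C by rewrite /C trmx_drsub hN.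
have hK : C *m P^T *m B^T = B^T.
  by rewrite -{2}hBPC !trmx_mul hC mulmxA.
have hK' : forall k' (X : 'M[R]_(q, k')), C *m (P^T *m (B^T *m X)) = B^T *m X.
  by move=> k' X; rewrite !mulmxA hK.
have hBPC' : forall k' (X : 'M[R]_(r, k')), B *m (P *m (C *m X)) = B *m X.
  by move=> k' X; rewrite !mulmxA hBPC.
have eN : N = block_mx A B B^T C by rewrite -hBt submxK.
rewrite hBt {1}eN tr_col_mx mul_row_block mul_row_col.
rewrite !linearD /= !trmx_mul !trmxK.
rewrite !mulmxDl !mulmxN !mulNmx -!mulmxA !hK' !hBPC'.
by apply: zfact.
Qed.


Lemma symform (R : realType) n (S : 'M[R]_n) (u v : 'cV[R]_n) :
  symmx S -> (u^T *m S *m v) 0 0 = (v^T *m S *m u) 0 0.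
Proof.
move=> hS; transitivity ((u^T *m S *m v)^T 0 0); first by rewrite [RHS]mxE.
by rewrite !trmx_mul trmxK hS mulmxA.
Qed.

Lemma cs (R : realType) n (S : 'M[R]_n) (x v : 'cV[R]_n) :
  psd S -> 0 < (x^T *m S *m x) 0 0 ->
  ((v^T *m S *m x) 0 0) ^+ 2 <= (v^T *m S *m v) 0 0 * (x^T *m S *m x) 0 0.
Proof.
move=> [hS hP] sp.
set s := (x^T *m S *m x) 0 0; set b := (v^T *m S *m x) 0 0; set a := (v^T *m S *m v) 0 0.
set t := b / s.
have hb : (x^T *m S *m v) 0 0 = b by rewrite symform.
have := hP (v - t *: x).
have eT : (v - t *: x)^T = v^T - t *: x^T by rewrite linearB /= linearZ.
rewrite eT !mulmxBl !mulmxBr -!scalemxAl -!scalemxAr.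
have E : forall (M1 M2 M3 M4 : 'M[R]_1),
  (M1 - t *: M2 - (t *: M3 - t *: (t *: M4))) 0 0 =
  M1 0 0 - t * M2 0 0 - (t * M3 0 0 - t * (t * M4 0 0)) by move=> *; rewrite !mxE.
rewrite E -/a -/b -/s hb => H.
have ht : t * s = b by rewrite /t mulfVK // gt_eqF.
have := mulr_ge0 (ltW sp) H.
have -> : s * (a - t * b - (t * b - t * (t * s))) = a * s - b ^+ 2.
  by rewrite -ht; ring.
by rewrite subr_ge0.
Qed.

Theorem mainTheorem6 (R : realType) (q r : nat) (N : 'M[R]_(q + r))
    (x : 'cV[R]_q) (y : 'cV[R]_r) :
  Pi_set N -> x != 0 ->
  0 <= ((col_mx x y)^T *m N *m col_mx x y) 0 0 ->
  exists Z : 'M[R]_(r, q), Zset N Z /\ col_mx x y = col_mx 1%:M Z *m x.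
Proof.
move=> [hN hCn hS hk] hx hq.
have hC : (drsubmx N)^T = drsubmx N by rewrite trmx_drsub hN.
rewrite (quad x y hN hk) in hq.
have hquad := fun Z : 'M[R]_(r, q) => quad 1%:M Z hN hk.
set C := drsubmx N in hC hq hCn hquad; set S := schur N in hS hq hquad.
set K := (mpinv C)^T *m (ursubmx N)^T in hq hquad.
set d := y + K *m x in hq.
set s := (x^T *m S *m x) 0 0; set c := (d^T *m C *m d) 0 0.
have hsc : 0 <= s + c by move: hq; rewrite mxE.
have hc : c <= 0.
  by case: hCn => _ /(_ d); rewrite mulmxN mulNmx mxE oppr_ge0.
have hs0 : 0 <= s by case: hS => _ /(_ x).
have [w hw1 hw2] : exists2 w : 'cV[R]_q, w^T *m x = 1%:M &
    forall v : 'cV[R]_q, 0 <= (v^T *m S *m v) 0 0 + c * ((w^T *m v) 0 0) ^+ 2.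
  have hSs : symmx S by case: hS.
  have hSp : forall v : 'cV[R]_q, 0 <= (v^T *m S *m v) 0 0 by case: hS.
  case: (eqVneq s 0) => [s0|sn0].
    have c0 : c = 0 by apply/eqP; rewrite eq_le hc /=; move: hsc; rewrite s0 add0r.
    set n0 := (x^T *m x) 0 0.
    have n0n : n0 != 0.
      by apply/eqP => h; move: hx; rewrite (sos0 h) eqxx.
    exists (n0^-1 *: x).
      rewrite linearZ /= -scalemxAl [x^T *m x]mx11_scalar -/n0 scale_scalar_mx mulVf //.
    by move=> v; rewrite c0 mul0r addr0.
  have sp : 0 < s by rewrite lt_def sn0 hs0.
  exists (s^-1 *: (S *m x)).
    rewrite linearZ /= -scalemxAl trmx_mul hSs [x^T *m S *m x]mx11_scalar -/s.
    by rewrite scale_scalar_mx mulVf.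
  move=> v.
  have -> : ((s^-1 *: (S *m x))^T *m v) 0 0 = s^-1 * (v^T *m S *m x) 0 0.
    have eT : (s^-1 *: (S *m x))^T = s^-1 *: (x^T *m S) by rewrite linearZ /= trmx_mul hSs.
    have E : forall M : 'M[R]_1, (s^-1 *: M) 0 0 = s^-1 * M 0 0 by move=> M; rewrite mxE.
    by rewrite eT -scalemxAl E (symform x v hSs).
  have := cs v hS sp; rewrite -/s.
  set b := (v^T *m S *m x) 0 0; set a := (v^T *m S *m v) 0 0.
  move=> h.
  set t := s^-1.
  have ht : s * t = 1 by rewrite /t mulfV.
  have tp : 0 < t by rewrite /t invr_gt0.
  have e1 : s * (t * b) ^+ 2 = (s * t) * (t * b ^+ 2) by ring.
  rewrite ht mul1r in e1.
  have e2 : t * (a * s - b ^+ 2) = a * (s * t) - t * b ^+ 2 by ring.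
  rewrite ht mulr1 in e2.
  have h2 : 0 <= t * (a * s - b ^+ 2) by apply: mulr_ge0; [exact: ltW | rewrite subr_ge0].
  have h3 : - s * (t * b) ^+ 2 <= c * (t * b) ^+ 2.
    by rewrite ler_wpM2r ?sqr_ge0 // -subr_ge0 opprK addrC.
  rewrite mulNr e1 in h3; rewrite e2 in h2.
  lra.
exists (d *m w^T - K); split.
  rewrite /Zset hquad trmx1 mul1mx !mulmx1 subrK.
  case: hS => hSs hSp; split.
    rewrite /symmx linearD /= hSs !trmx_mul !trmxK hC !mulmxA //.
  move=> v; rewrite mulmxDr mulmxDl mxE.
  have -> : v^T *m ((d *m w^T)^T *m C *m (d *m w^T)) *m v =
      (d *m w^T *m v)^T *m C *m (d *m w^T *m v).
    by rewrite !trmx_mul !mulmxA.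
  set a := (w^T *m v) 0 0.
  have -> : d *m w^T *m v = a *: d.
    by rewrite -mulmxA [w^T *m v]mx11_scalar mul_mx_scalar.
  have eT : (a *: d)^T = a *: d^T by rewrite linearZ.
  rewrite -scalemxAr eT -!scalemxAl.
  have E : forall M : 'M[R]_1, (a *: (a *: M)) 0 0 = a * (a * M 0 0).
    by move=> M; rewrite !mxE.
  rewrite E -/c.
  have := hw2 v; rewrite -/a.
  by rewrite mulrA -expr2 mulrC.
rewrite mul_col_mx mul1mx mulmxBl -mulmxA hw1 mulmx1 /d addrK //.
Qed.
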